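(* Let $\mathcal{G}^{\mathrm{los}}=(\mathcal{V},\mathcal{E}^{\mathrm{los}})$ be a finite undirected graph with vertex set partitioned into subgroups $\mathcal{V}_1,\dots,\mathcal{V}_M$, such that $\mathcal{G}^{\mathrm{los}}$ is connected and each induced subgraph $\mathcal{G}^{\mathrm{los}}[\mathcal{V}_m]$ is connected. Let each edge $(v_i,v_j)\in\mathcal{E}^{\mathrm{los}}$ carry a real weight $w^{\mathrm{d+los}}_{i,j}=w^{\mathrm{los}}_{i,j}+w^{\mathrm{d}}_{i,j}$, and define $w'_{i,j}=-\beta w^{\mathrm{d+los}}_{i,j}$ if $v_i,v_j$ lie in the same subgroup and $w'_{i,j}=-w^{\mathrm{d+los}}_{i,j}$ otherwise, where $\beta\gg1$ is chosen so that every intra-subgroup weight $w'_{i,j}$ is strictly smaller than every inter-subgroup weight $w'_{i',j'}$. Let $\bar{\mathcal{T}}$ (the ULOS-LCT) be a spanning tree of $\mathcal{G}^{\mathrm{los}}$ minimizing $\sum_{(v_i,v_j)\in\mathcal{E}(\mathcal{T})}w'_{i,j}$ over all spanning trees $\mathcal{T}$ of $\mathcal{G}^{\mathrm{los}}$. Then (i) $\bar{\mathcal{T}}$ is globally and subgroup LOS connected, i.e. it spans $\mathcal{V}$ and each induced subgraph $\bar{\mathcal{T}}[\mathcal{V}_m]$, $m=1,\dots,M$, is connected; and (ii) $\bar{\mathcal{T}}$ is least violated under the nominal controller among candidate trees, i.e. it minimizes $\sum_{(v_i,v_j)\in\mathcal{E}(\mathcal{T})}\big(-w^{\mathrm{d+los}}_{i,j}\big)$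 over all spanning trees $\mathcal{T}$ of $\mathcal{G}^{\mathrm{los}}$ for which every $\mathcal{T}[\mathcal{V}_m]$ is connected.
   Context: Interpretation: vertices are robots, edges are currently Line-of-Sight (LOS) connected pairs (within communication range and with unobstructed segment). The weights quantify, under the nominal task controller $\tilde{\mathbf u}$, how far the pairwise LOS constraints are from being violated (larger $w^{\mathrm{d+los}}_{i,j}$ = less violation). In the paper $w^{\mathrm{los}}_{i,j}=\frac1L\sum_{o=1}^L\big(\dot h^{\mathrm{los}}_{i,j,o}(\hat{\mathbf x},\mathbf x^{\mathrm{obs}},\tilde{\mathbf u})+\gamma h^{\mathrm{los}}_{i,j,o}(\hat{\mathbf x},\mathbf x^{\mathrm{obs}})\big)$ (average margin of the occlusion-free barrier constraints over $L$ obstacle points) and $w^{\mathrm{d}}_{i,j}$ is the margin $f^{\sigma^{\mathrm c}}_{i,j}-B^{\sigma^{\mathrm c}}_{i,j}\tilde{\mathbf u}$ of the linear probabilistic communication-distance constraints $B^{\sigma^{\mathrm c}}_{i,j}\mathbf u\le f^{\sigma^{\mathrm c}}_{i,j}$; the result only uses that each $w^{\mathrm{d+los}}_{i,j}$ is a real number. A graph is subgroup LOS connected if each of its induced subgraphs on $\mathcal{V}_m$ is connected. *)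

(* Defs.v *)
From mathcomp Require Import all_boot all_order all_algebra.
Set Implicit Arguments. Unset Strict Implicit. Unset Printing Implicit Defensive.
Import Order.TTheory GRing.Theory Num.Theory.
Local Open Scope ring_scope.

Section Graphs.
Variable V : finType.

(* Undirected edges are 2-element vertex sets {u,v}. Edge set of the graph
   given by an adjacency relation e. *)
Definition edges_of (e : rel V) : {set {set V}} :=
  [set E : {set V} | [exists u, exists v, e u v && (E == [set u; v])]].

Definition adj (F : {set {set V}}) (S : {set V}) : rel V :=
  fun u v => [&& u \in S, v \in S, u != v & [set u; v] \in F].

Definition conn_on (F : {set {set V}}) (S : {set V}) : Prop :=
  forall u v, u \in S -> v \in S -> connect (adj F S) u v.

Definition acyclic (F : {set {set V}}) : Prop :=
  forall c : seq V, (2 < size c)%N -> ~ ucycle (adj F setT) c.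

Definition spanning_tree (e : rel V) (F : {set {set V}}) : Prop :=
  [/\ F \subset edges_of e, conn_on F setT & acyclic F].

Definition subgroup (M : nat) (g : V -> 'I_M) (m : 'I_M) : {set V} :=
  [set v | g v == m].

Definition intra (M : nat) (g : V -> 'I_M) (E : {set V}) : bool :=
  [forall u in E, forall v in E, g u == g v].

Definition wprime (R : ringType) (M : nat) (g : V -> 'I_M) (beta : R)
  (w : {set V} -> R) (E : {set V}) : R :=
  if intra g E then - (beta * w E) else - w E.

End Graphs.

(* Main.v *)
Require Import Defs.
From mathcomp Require Import all_boot all_order all_algebra.
Set Implicit Arguments. Unset Strict Implicit. Unset Printing Implicit Defensive.
Import Order.TTheory GRing.Theory Num.Theory.

Section G.
Variable V : finType.
Implicit Types (F : {set {set V}}).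

Definition rr F : rel V := adj F setT.

Lemma rrE F u v : rr F u v = (u != v) && ([set u; v] \in F).
Proof. by rewrite /rr /adj !in_setT. Qed.

Lemma rr_sym F : symmetric (rr F).
Proof. by move=> u v; rewrite !rrE eq_sym setUC. Qed.

Lemma csym F : connect_sym (rr F).
Proof. exact: sym_connect_sym (rr_sym F). Qed.

Lemma conn_mono F1 F2 x y : F1 \subset F2 -> connect (rr F1) x y -> connect (rr F2) x y.
Proof.
move=> sub; apply: connect_sub => a b; rewrite rrE => /andP[ab H].
by apply: connect1; rewrite rrE ab (subsetP sub).
Qed.

Lemma set2_eq (p q u v : V) : p != q -> [set p; q] = [set u; v] ->
  (p = u /\ q = v) \/ (p = v /\ q = u).
Proof.
move=> pq E.
have hp : p \in [set u; v] by rewrite -E set21.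
have hq : q \in [set u; v] by rewrite -E set22.
case/set2P: hp => Hp; case/set2P: hq => Hq; subst.
- by rewrite eqxx in pq.
- by left.
- by right.
- by rewrite eqxx in pq.
Qed.

Lemma key F (a b x y : V) :
  connect (rr ([set a; b] |: F)) x y =
  [|| connect (rr F) x y, connect (rr F) x a && connect (rr F) b y
    | connect (rr F) x b && connect (rr F) a y].
Proof.
have S := csym F.
set Q := fun z => [|| connect (rr F) x z, connect (rr F) x a && connect (rr F) b z
    | connect (rr F) x b && connect (rr F) a z].
have step : forall z z', Q z -> rr ([set a; b] |: F) z z' -> Q z'.
  move=> z z' Qz; rewrite rrE in_setU1 => /andP[zz' /orP[/eqP E|E]].
    have := set2_eq zz' E => -[[e1 e2]|[e1 e2]]; subst z z'; rewrite /Q.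
      by case/or3P: Qz => [H|/andP[H _]|/andP[H _]]; rewrite H ?connect0 ?orbT.
    by case/or3P: Qz => [H|/andP[H _]|/andP[H _]]; rewrite H ?connect0 ?orbT.
  have c1 : connect (rr F) z z' by apply: connect1; rewrite rrE zz'.
  rewrite /Q; case/or3P: Qz => [H|/andP[H1 H2]|/andP[H1 H2]].
  - by rewrite (connect_trans H c1).
  - by rewrite H1 (connect_trans H2 c1) orbT.
  - by rewrite H1 (connect_trans H2 c1) !orbT.
apply/idP/idP.
  case/connectP=> p pth ->.
  have gen : forall p z, path (rr ([set a; b] |: F)) z p -> Q z -> Q (last z p).
    by elim=> [|z0 p0 IH] z //= /andP[zz pp] Qz; apply: IH pp (step _ _ Qz zz).
  by apply: gen pth _; rewrite /Q connect0.
have sub : F \subset [set a; b] |: F by apply/subsetP=> E EF; rewrite in_setU1 EF orbT.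
have eab : connect (rr ([set a; b] |: F)) a b.
  case: (eqVneq a b) => [->|ab]; first exact: connect0.
  by apply: connect1; rewrite rrE ab setU11.
have eba : connect (rr ([set a; b] |: F)) b a by rewrite csym.
case/or3P=> [H|/andP[H1 H2]|/andP[H1 H2]]; first exact: conn_mono sub H.
  exact: connect_trans (connect_trans (conn_mono sub H1) eab) (conn_mono sub H2).
exact: connect_trans (connect_trans (conn_mono sub H1) eba) (conn_mono sub H2).
Qed.


Definition cls F x : {set V} := [set y | connect (rr F) x y].
Definition ncomp F := #|[set cls F x | x : V]|.

Lemma cls_eq F x y : connect (rr F) x y -> cls F x = cls F y.
Proof.
move=> H; apply/setP=> z; rewrite !inE; exact: (same_connect (csym F) H).
Qed.

Lemma ncomp_eq F1 F2 : connect (rr F1) =2 connect (rr F2) -> ncomp F1 = ncomp F2.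
Proof.
move=> E; rewrite /ncomp (@eq_imset _ _ (cls F1) (cls F2)) // => x.
by apply/setP=> y; rewrite !inE E.
Qed.

Lemma ncomp0 : ncomp set0 = #|V|.
Proof.
rewrite /ncomp (@eq_imset _ _ (cls set0) (@set1 V)).
  by rewrite card_imset ?cardsT //; apply: set1_inj.
move=> x; apply/setP=> y; rewrite !inE.
apply/idP/idP; last by move/eqP->; apply: connect0.
case/connectP=> [[|z p]] //=; first by move=> _ ->.
by rewrite rrE inE andbF.
Qed.

Lemma ncomp_same F u v : connect (rr F) u v -> ncomp ([set u; v] |: F) = ncomp F.
Proof.
move=> H; apply: ncomp_eq => x y; rewrite key.
apply/idP/idP; last by move->.
case/or3P=> [->|/andP[H1 H2]|/andP[H1 H2]] //.
  exact: connect_trans (connect_trans H1 H) H2.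
by rewrite csym in H; exact: connect_trans (connect_trans H1 H) H2.
Qed.

Lemma ncomp_merge F u v : ~~ connect (rr F) u v ->
  (ncomp ([set u; v] |: F) + 1 = ncomp F)%N.
Proof.
move=> nuv.
have S := csym F.
set Cu := cls F u; set Cv := cls F v.
have nvu : ~~ connect (rr F) v u by rewrite S.
have clsE : forall x, cls ([set u; v] |: F) x =
   if x \in Cu :|: Cv then Cu :|: Cv else cls F x.
  move=> x; rewrite !inE; case: (boolP (connect (rr F) u x)) => hux /=.
    have hxu : connect (rr F) x u by rewrite S.
    have hxv : connect (rr F) x v = false.
      by apply/negbTE; apply: contra nuv; apply: connect_trans.
    apply/setP=> y; rewrite !inE key (same_connect S hxu) hxu hxv /=.
    by rewrite orbF.
  case: (boolP (connect (rr F) v x)) => hvx /=.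
    have hxv : connect (rr F) x v by rewrite S.
    have hxu : connect (rr F) x u = false.
      by apply/negbTE; apply: contra nvu; apply: connect_trans.
    apply/setP=> y; rewrite !inE key (same_connect S hxv) hxu hxv /=.
    by rewrite orbC.
  apply/setP=> y; rewrite !inE key.
  have -> : connect (rr F) x u = false by apply/negbTE; rewrite S.
  have -> : connect (rr F) x v = false by apply/negbTE; rewrite S.
  by rewrite /= orbF.
have uCu : u \in Cu by rewrite inE connect0.
have vCv : v \in Cv by rewrite inE connect0.
have vCu : v \notin Cu by rewrite inE.
have CuCv : Cu != Cv by apply/eqP=> E; rewrite E vCv in vCu.
have inCu : forall x, x \in Cu -> cls F x = Cu.
  by move=> x; rewrite inE => h; rewrite /Cu (cls_eq h).
have inCv : forall x, x \in Cv -> cls F x = Cv.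
  by move=> x; rewrite inE => h; rewrite /Cv (cls_eq h).
set P := [set cls F x | x : V].
have PE : [set cls ([set u; v] |: F) x | x : V] = (Cu :|: Cv) |: (P :\ Cu :\ Cv).
  apply/setP=> C; apply/imsetP/idP.
    case=> x _ ->; rewrite clsE; case: ifP => hx; first by rewrite setU11.
    rewrite !inE; apply/orP; right.
    have xc : x \in cls F x by rewrite inE connect0.
    have xP : cls F x \in P by apply/imsetP; exists x.
    rewrite xP andbT.
    apply/andP; split; apply/eqP=> E; rewrite E in xc; by rewrite inE xc ?orbT in hx.
  rewrite !inE => /orP[/eqP->|/and3P[nCv nCu /imsetP[x _ Cx]]].
    by exists u => //; rewrite clsE inE uCu.
  exists x => //; rewrite clsE; case: ifP => // /setUP[/inCu|/inCv] E.
    by rewrite Cx E eqxx in nCu.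
  by rewrite Cx E eqxx in nCv.
have CuP : Cu \in P by apply/imsetP; exists u.
have CvP : Cv \in P :\ Cu by rewrite !inE eq_sym CuCv; apply/imsetP; exists v.
have nU : (Cu :|: Cv) \notin (P :\ Cu :\ Cv).
  rewrite !inE; apply/negP=> /and3P[n1 n2 /imsetP[x _ Ex]].
  have : u \in cls F x by rewrite -Ex inE uCu.
  rewrite inE S => hux.
  have E : cls F x = Cu by apply: inCu; rewrite inE.
  have : v \in Cu by rewrite -E -Ex inE vCv orbT.
  by rewrite (negbTE vCu).
rewrite /ncomp PE cardsU1 nU (cardsD1 Cu P) CuP (cardsD1 Cv (P :\ Cu)) CvP.
by rewrite /= add1n addn1 -addn1 addnC.
Qed.

Definition good F := forall E, E \in F -> exists u v, u != v /\ E = [set u; v].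
Definition forest F := forall u v, u != v -> [set u; v] \in F ->
  ~~ connect (rr (F :\ [set u; v])) u v.

Lemma good_sub F1 F2 : F1 \subset F2 -> good F2 -> good F1.
Proof. by move=> s g E /(subsetP s) /g. Qed.

Lemma forest_sub F1 F2 : F1 \subset F2 -> forest F2 -> forest F1.
Proof.
move=> s f u v uv /(subsetP s) h; apply: contra (f u v uv h); apply: conn_mono.
exact: setSD.
Qed.

Lemma forest_add F u v : forest F -> ~~ connect (rr F) u v -> u != v ->
  [set u; v] \notin F -> forest ([set u; v] |: F).
Proof.
move=> fF nuv uv nin p q pq; rewrite in_setU1 => /orP[/eqP E|pqF].
  rewrite E setU1K //.
  have [[-> ->]|[-> ->]] := set2_eq pq E => //.
  by rewrite csym.
have ne : [set p; q] != [set u; v] by apply: contraNneq nin => <-.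
have -> : ([set u; v] |: F) :\ [set p; q] = [set u; v] |: (F :\ [set p; q]).
  by apply/setP=> E; rewrite !inE; case: (eqVneq E [set u; v]) => // ->; rewrite eq_sym ne.
rewrite key; apply/negP => /or3P[H|/andP[H1 H2]|/andP[H1 H2]].
- by move: (fF p q pq pqF); rewrite H.
- have sub := subD1set F [set p; q].
  have h1 := conn_mono sub H1; have h2 := conn_mono sub H2.
  have hpq : connect (rr F) p q by apply: connect1; rewrite rrE pq.
  rewrite csym in h1; rewrite csym in h2.
  by move: nuv; rewrite (connect_trans h1 (connect_trans hpq h2)).
- have sub := subD1set F [set p; q].
  have h1 := conn_mono sub H1; have h2 := conn_mono sub H2.
  have hpq : connect (rr F) p q by apply: connect1; rewrite rrE pq.
  rewrite csym in hpq.
  by move: nuv; rewrite (connect_trans h2 (connect_trans hpq h1)).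
Qed.

Lemma count F : good F ->
  (#|V| <= #|F| + ncomp F)%N /\ (forest F <-> #|F| + ncomp F = #|V|)%N.
Proof.
move: {2}#|F| (erefl #|F|) => n; elim: n F => [|n IH] F cF gF.
  rewrite (cards0_eq cF) ncomp0 cards0; split => //; split => // _ u v _.
  by rewrite inE.
have [E EF] : exists E, E \in F by apply/set0Pn; rewrite -card_gt0 cF.
have [u [v [uv Euv]]] := gF E EF.
set F0 := F :\ E.
have FE : F = [set u; v] |: F0 by rewrite -Euv setD1K.
have cF0 : #|F0| = n by move: cF; rewrite (cardsD1 E) EF add1n => -[].
have nin : [set u; v] \notin F0 by rewrite -Euv !inE eqxx.
have gF0 : good F0 by apply: good_sub gF; apply: subD1set.
have [IH1 IH2] := IH F0 cF0 gF0.
rewrite cF.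
case: (boolP (connect (rr F0) u v)) => c0.
  have nc : ncomp F = ncomp F0 by rewrite FE ncomp_same.
  rewrite nc; split; first by apply: leq_trans IH1 _; rewrite cF0 leq_add2r.
  split=> H; exfalso.
    by move: (H u v uv); rewrite -Euv EF -/F0 c0 => /(_ isT).
  by move: IH1; rewrite -H cF0 addSn ltnn.
have nc : (ncomp F + 1 = ncomp F0)%N by rewrite FE ncomp_merge.
have -> : (n.+1 + ncomp F = #|F0| + ncomp F0)%N by rewrite -nc cF0 addnA addn1.
split=> //; split=> [H|/IH2 H].
  by apply/IH2; apply: forest_sub H; apply: subD1set.
by rewrite FE; apply: forest_add.
Qed.

Lemma rr_sub F1 F2 : F1 \subset F2 -> subrel (rr F1) (rr F2).
Proof. by move=> s x y; rewrite !rrE => /andP[-> /(subsetP s)]. Qed.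

Lemma acyc_forest F : acyclic F -> forest F.
Proof.
move=> ac u v uv uvF; apply/negP => /connectP[p pth].
case/shortenP: pth => p' pth' uq _ lst.
have sp : path (rr F) u p' by apply: sub_path pth'; apply: rr_sub; apply: subD1set.
apply: (ac (u :: p')).
  case: p' pth' uq lst {sp} => [|a [|b q]] //= pth' uq lst.
    by rewrite lst eqxx in uv.
  by move: pth'; rewrite -lst rrE !inE eqxx /= andbF.
rewrite /ucycle uq andbT.
have -> : cycle (adj F setT) (u :: p') = path (rr F) u (rcons p' u) by [].
rewrite rcons_path sp /= -lst rrE eq_sym uv /=.
by rewrite setUC.
Qed.

Lemma forest_acyc F : forest F -> acyclic F.
Proof.
move=> fF [|x [|y [|z q']]] //= _; rewrite /ucycle => /andP[cyc uq].
set q := z :: q'.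
have cE : cycle (adj F setT) (x :: y :: q) = rr F x y && path (rr F) y (rcons q x) by [].
move: cyc; rewrite cE => /andP[xy].
rewrite rcons_path => /andP[pq lq].
move: uq; rewrite [uniq _]/= => /andP[xnin /andP[ynin _]].
have xy' : x != y by move: xy; rewrite rrE => /andP[].
have xyF : [set x; y] \in F by move: xy; rewrite rrE => /andP[].
have := fF x y xy' xyF; apply/negP; rewrite negbK csym.
set F' := F :\ [set x; y].
have sub : {in predC1 x &, subrel (rr F) (rr F')}.
  move=> a b; rewrite !inE => ax bx; rewrite !rrE => /andP[ab abF].
  rewrite ab !inE abF andbT /=; apply/eqP => E.
  have : x \in [set a; b] by rewrite E set21.
  by case/set2P => E'; [rewrite E' eqxx in ax | rewrite E' eqxx in bx].
have p1 : path (rr F') y q.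
  have := sub_in_path sub; move=> H; apply: (H y q _ pq); apply/allP => a ain /=; apply/eqP => E; by rewrite -E ain in xnin.
have zq : last y q \in q by rewrite /q /= mem_last.
have zy : last y q != y by apply: contraNneq ynin => <-.
have zx : last y q != x by apply: contraNneq xnin => <-; rewrite inE zq orbT.
have e2 : rr F' (last y q) x.
  move: lq; rewrite !rrE !inE => /andP[zx' ->]; rewrite zx' andbT /=.
  apply/eqP => E.
  have : last y q \in [set x; y] by rewrite -E set21.
  by case/set2P => E'; [rewrite E' eqxx in zx | rewrite E' eqxx in zy].
apply: connect_trans (connect1 e2).
by apply/connectP; exists q.
Qed.

Lemma exit_lem (e1 e2 : rel V) u v : connect e1 u v -> ~~ connect e2 u v ->
  exists a b, [/\ connect e2 u a, e1 a b & ~~ connect e2 u b].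
Proof.
case/connectP=> p pth ->.
have gen : forall p x, connect e2 u x -> path e1 x p ->
    ~~ connect e2 u (last x p) ->
    exists a b, [/\ connect e2 u a, e1 a b & ~~ connect e2 u b].
  elim=> [|z q IH] x cx /=; first by rewrite cx.
  move=> /andP[xz pq] ncl.
  case: (boolP (connect e2 u z)) => cz; first exact: IH cz pq ncl.
  by exists x, z.
by apply: gen pth; apply: connect0.
Qed.

Lemma split_exit (P : pred V) a s : ~~ all P (a :: s) -> P a ->
  exists s1 q s2, [/\ s = s1 ++ q :: s2, all P (a :: s1) & ~~ P q].
Proof.
elim: s a => [|x s IH] a /=; first by rewrite andbT => /negP H /H.
move=> nall Pa; case: (boolP (P x)) => Px.
  have nall' : ~~ all P (x :: s) by move: nall; rewrite /= Pa Px.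
  have [s1 [q [s2 [E A nq]]]] := IH x nall' Px.
  by exists (x :: s1), q, s2; split => //; [rewrite E | rewrite /= Pa].

by exists [::], x, s; rewrite /= Pa.
Qed.

Lemma conn_inv (T : eqType) (f : V -> T) (r : rel V) x y :
  (forall a b, r a b -> f a = f b) -> connect r x y -> f x = f y.
Proof.
move=> H /connectP[p pth ->]; elim: p x pth => [|z p IH] x //= /andP[xz pth].
by rewrite (H _ _ xz); apply: IH.
Qed.

End G.

Section Main.
Variables (V : finType) (M : nat) (g : V -> 'I_M) (e : rel V).
Hypothesis irr : irreflexive e.

Lemma intra2 (a b : V) : intra g [set a; b] = (g a == g b).
Proof.
apply/idP/idP.
  by move/forall_inP/(_ a (set21 _ _))/forall_inP/(_ b (set22 _ _)).
move/eqP=> E; apply/forall_inP => x /set2P[->|->]; apply/forall_inP => y /set2P[->|->] //;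
  by rewrite E.
Qed.

Lemma edgesP E : reflect (exists u v, e u v /\ E = [set u; v]) (E \in edges_of e).
Proof.
rewrite inE; apply: (iffP existsP) => [[u /existsP[v /andP[uv /eqP ->]]]|[u [v [uv ->]]]].
  by exists u, v.
by exists u; apply/existsP; exists v; rewrite uv eqxx.
Qed.

Lemma good_edges (F : {set {set V}}) : F \subset edges_of e -> good F.
Proof.
move=> s E /(subsetP s) /edgesP[u [v [uv ->]]]; exists u, v; split => //.
by apply: contraTneq uv => ->; rewrite irr.
Qed.

Lemma st_iff (F : {set {set V}}) : F \subset edges_of e ->
  spanning_tree e F <-> ((forall x y, connect (rr F) x y) /\ (#|F| + ncomp F = #|V|)%N).
Proof.
move=> s; have gF := good_edges s; have [_ cnt] := count gF.
split.
  case=> _ cn ac; split; first by move=> x y; apply: cn.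
  by apply/cnt/acyc_forest.
case=> cn ct; split; [exact: s | by move=> x y _ _; apply: cn | ].
by apply/forest_acyc/cnt.
Qed.

Lemma ncomp_conn (F1 F2 : {set {set V}}) : (forall x y, connect (rr F1) x y) ->
  (forall x y, connect (rr F2) x y) -> ncomp F1 = ncomp F2.
Proof. by move=> h1 h2; apply: ncomp_eq => x y; rewrite h1 h2. Qed.

Local Open Scope ring_scope.

Lemma part1 (R : realFieldType) (w' : {set V} -> R) (Tbar : {set {set V}}) :
  (forall m : 'I_M, conn_on (edges_of e) (subgroup g m)) ->
  (forall E1 E2, E1 \in edges_of e -> E2 \in edges_of e ->
     intra g E1 -> ~~ intra g E2 -> w' E1 < w' E2) ->
  spanning_tree e Tbar ->
  (forall T, spanning_tree e T -> \sum_(E in Tbar) w' E <= \sum_(E in T) w' E) ->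
  forall m, conn_on Tbar (subgroup g m).
Proof.
move=> hsub hw hst hmin m u v uS vS.
have sT : Tbar \subset edges_of e by case: hst.
have [cT ctT] := (st_iff sT).1 hst.
case: (boolP (connect (adj Tbar (subgroup g m)) u v)) => // nc; exfalso.
set S := subgroup g m.
have [a [b [ua ab nub]]] := exit_lem (hsub m u v uS vS) nc.
move: ab; rewrite /adj => /and4P[aS bS abne abE].
have nab : ~~ connect (adj Tbar S) a b by apply: contra nub; apply: connect_trans ua.
have fnin : [set a; b] \notin Tbar.
  by apply: contra nab => h; apply: connect1; rewrite /adj aS bS abne h.
have gam : g a = m by move: aS; rewrite inE => /eqP.
have gbm : g b = m by move: bS; rewrite inE => /eqP.
move: (cT a b) => /connectP[p0 pth0].
case/shortenP: pth0 => p pth uq _ lst.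
have subS : {in S &, subrel (rr Tbar) (adj Tbar S)}.
  by move=> x y xS yS; rewrite rrE /adj xS yS.
case: (boolP (all (fun x => x \in S) (a :: p))) => allS.
  move: nab; rewrite lst => /negP; apply; apply/connectP; exists p => //.
  exact: (sub_in_path subS allS pth).
have [s1 [q [s2 [pE A qnS]]]] := split_exit allS aS.
set pp := last a s1.
move: pth; rewrite pE cat_path => /andP[p1 /= /andP[ppq p2]].
have ppS : pp \in S by move/allP: A; apply; apply: mem_last.
have ppnin : pp \notin q :: s2.
  move: uq; rewrite pE -cat_cons cat_uniq => /and3P[_ hn _].
  apply/negP => hin; move/hasPn: hn => /(_ pp hin); rewrite /= mem_last.
  by [].
move: lst; rewrite pE last_cat /= => lst.
set E2 := [set pp; q].
have ppqne : pp != q by move: ppq; rewrite rrE => /andP[].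
have E2T : E2 \in Tbar by move: ppq; rewrite rrE => /andP[].
set F0 := Tbar :\ E2.
have c1 : connect (rr F0) a pp.
  apply/connectP; exists s1 => //.
  have sub1 : {in S &, subrel (rr Tbar) (rr F0)}.
    move=> x y xS yS; rewrite !rrE !inE => /andP[-> ->]; rewrite andbT.
    apply/eqP => E; have : q \in [set x; y] by rewrite E set22.
    by case/set2P => E'; [rewrite E' xS in qnS | rewrite E' yS in qnS].
  exact: (sub_in_path sub1 A p1).
have c2 : connect (rr F0) q b.
  rewrite lst; apply/connectP; exists s2 => //.
  have sub2 : {in predC1 pp &, subrel (rr Tbar) (rr F0)}.
    move=> x y; rewrite !inE => xp yp; rewrite !rrE !inE => /andP[-> ->]; rewrite andbT.
    apply/eqP => E; have : pp \in [set x; y] by rewrite E set21.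
    by case/set2P => E'; [rewrite E' eqxx in xp | rewrite E' eqxx in yp].
  apply: (sub_in_path sub2) p2.
  apply/allP => x xin /=; apply: contraNneq ppnin => <-; exact: xin.
set T' := [set a; b] |: F0.
have sub' : F0 \subset T' by apply/subsetP => E EF; rewrite in_setU1 EF orbT.
have key2 : subrel (rr Tbar) (connect (rr T')).
  move=> x y r'; case: (eqVneq [set x; y] E2) => hE.
    have cpq : connect (rr T') pp q.
      have c1' : connect (rr F0) pp a by rewrite csym.
      have c2' : connect (rr F0) b q by rewrite csym.
      apply: connect_trans (conn_mono sub' c1') _.
      apply: connect_trans (conn_mono sub' c2').
      by apply: connect1; rewrite rrE abne setU11.
    have xy : x != y by move: r'; rewrite rrE => /andP[].
    have [[-> ->]|[-> ->]] := set2_eq xy hE => //.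
    by rewrite csym.
  apply: connect1; move: r'; rewrite !rrE => /andP[-> h] /=.
  by rewrite in_setU1 !inE hE h !orbT.
have cT' : forall x y, connect (rr T') x y.
  by move=> x y; exact: (connect_sub key2 (cT x y)).
have fnin' : [set a; b] \notin F0 by rewrite !inE negb_and fnin orbT.
have sT' : T' \subset edges_of e.
  apply/subsetP => E; rewrite in_setU1 => /orP[/eqP ->|]; first exact: abE.
  by move=> EF0; apply: (subsetP sT); move: EF0; rewrite /F0 in_setD1 => /andP[].
have st' : spanning_tree e T'.
  apply/(st_iff sT'); split => //.
  rewrite (ncomp_conn cT' cT) -ctT /T' cardsU1 fnin' (cardsD1 E2 Tbar) E2T.
  by [].
have := hmin T' st'; rewrite big_setU1 //= (big_setD1 _ E2T) /= lerD2r.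
have ppm : g pp = m by move: ppS; rewrite inE => /eqP.
have qm : g q != m by move: qnS; rewrite inE.
have := hw [set a; b] E2 abE (subsetP sT _ E2T).
rewrite !intra2 gam gbm eqxx ppm eq_sym qm => /(_ isT isT).
by rewrite ltNge => /negbTE ->.
Qed.


Lemma connI (A : {set {set V}}) : (forall m, conn_on A (subgroup g m)) ->
  forall x y, connect (rr [set E in A | intra g E]) x y = (g x == g y).
Proof.
move=> hA x y; apply/idP/eqP.
  apply: conn_inv => a b; rewrite rrE !inE intra2 => /andP[_ /andP[_ /eqP]] //.
move=> gxy.
have xS : x \in subgroup g (g x) by rewrite inE.
have yS : y \in subgroup g (g x) by rewrite inE gxy.
apply: connect_sub (hA _ x y xS yS) => a b.
rewrite /adj !inE => /and4P[/eqP ga /eqP gb ab abA].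
by apply: connect1; rewrite rrE ab !inE abA intra2 ga gb eqxx.
Qed.

Lemma mix_st (A B : {set {set V}}) :
  spanning_tree e A -> spanning_tree e B ->
  (forall m, conn_on A (subgroup g m)) -> (forall m, conn_on B (subgroup g m)) ->
  spanning_tree e ([set E in A | intra g E] :|: [set E in B | ~~ intra g E]).
Proof.
move=> stA stB hA hB.
have sA : A \subset edges_of e by case: stA.
have sB : B \subset edges_of e by case: stB.
have [cA ctA] := (st_iff sA).1 stA.
have [cB ctB] := (st_iff sB).1 stB.
set IA := [set E in A | intra g E]; set XB := [set E in B | ~~ intra g E].
set IB := [set E in B | intra g E].
set Mx := IA :|: XB.
have sM : Mx \subset edges_of e.
  apply/subsetP => E /setUP[/setIdP[h _]|/setIdP[h _]].
    exact: (subsetP sA).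
  exact: (subsetP sB).
have key3 : subrel (rr B) (connect (rr Mx)).
  move=> x y r'; case: (boolP (intra g [set x; y])) => hi.
    have gxy : g x = g y by move: hi; rewrite intra2 => /eqP.
    have xS : x \in subgroup g (g x) by rewrite inE.
    have yS : y \in subgroup g (g x) by rewrite inE gxy.
    apply: connect_sub (hA _ x y xS yS) => a b.
    rewrite /adj !inE => /and4P[/eqP ga /eqP gb ab abA].
    by apply: connect1; rewrite rrE ab !inE abA intra2 ga gb eqxx.
  apply: connect1; move: r'; rewrite !rrE => /andP[-> h].
  by rewrite !inE h hi orbT.
have cM : forall x y, connect (rr Mx) x y.
  by move=> x y; exact: (connect_sub key3 (cB x y)).
apply/(st_iff sM); split => //.
have fA : forest A by apply/(proj2 (count (good_edges sA))).
have fB : forest B by apply/(proj2 (count (good_edges sB))).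
have sIA : IA \subset A by apply/subsetP => E; rewrite inE => /andP[].
have sIB : IB \subset B by apply/subsetP => E; rewrite inE => /andP[].
have cIA := proj1 (proj2 (count (good_sub sIA (good_edges sA)))) (forest_sub sIA fA).
have cIB := proj1 (proj2 (count (good_sub sIB (good_edges sB)))) (forest_sub sIB fB).
have nI : ncomp IA = ncomp IB by apply: ncomp_eq => x y; rewrite !connI.
have eIAB : #|IA| = #|IB|.
  by apply/eqP; rewrite -(eqn_add2r (ncomp IA)) cIA nI cIB.
have cardM : #|Mx| = (#|IA| + #|XB|)%N.
  rewrite -(cardsID [set E | intra g E] Mx); congr (_ + _)%N.
    apply: eq_card => E; rewrite !inE; case: (intra g E); rewrite ?andbT ?andbF ?orbF //.
  apply: eq_card => E; rewrite !inE; case: (intra g E); rewrite ?andbT ?andbF //.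
have cardB : #|B| = (#|IB| + #|XB|)%N.
  rewrite -(cardsID [set E | intra g E] B); congr (_ + _)%N.
    apply: eq_card => E; rewrite !inE; case: (intra g E); rewrite ?andbT ?andbF //.
  apply: eq_card => E; rewrite !inE; case: (intra g E); rewrite ?andbT ?andbF //.
by rewrite (ncomp_conn cM cB) cardM eIAB -cardB.
Qed.

End Main.

Unset Implicit Arguments.
Local Open Scope ring_scope.

Theorem theorem5 (V : finType) (M : nat) (g : V -> 'I_M) (e : rel V)
  (R : realFieldType) (w : {set V} -> R) (beta : R) (Tbar : {set {set V}}) :
  symmetric e -> irreflexive e ->
  conn_on (edges_of e) setT ->
  (forall m : 'I_M, conn_on (edges_of e) (subgroup g m)) ->
  1 < beta ->
  (forall E1 E2, E1 \in edges_of e -> E2 \in edges_of e ->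
     intra g E1 -> ~~ intra g E2 ->
     wprime g beta w E1 < wprime g beta w E2) ->
  spanning_tree e Tbar ->
  (forall T, spanning_tree e T ->
     \sum_(E in Tbar) wprime g beta w E <= \sum_(E in T) wprime g beta w E) ->
  (conn_on Tbar setT /\ forall m : 'I_M, conn_on Tbar (subgroup g m)) /\
  (forall T, spanning_tree e T -> (forall m : 'I_M, conn_on T (subgroup g m)) ->
     \sum_(E in Tbar) - w E <= \sum_(E in T) - w E).
Proof.
move=> _ irr _ hsub hbeta hw hst hmin.
have p1 : forall m, conn_on Tbar (subgroup g m).
  by move=> m; exact: (@part1 V M g e irr R (wprime g beta w) Tbar hsub hw hst hmin m).
split; first by split => //; case: hst.
move=> T hT hTm.
set w1 := wprime g beta w.
have dec : forall (F : {set {set V}}) (h : {set V} -> R),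
    \sum_(E in F) h E = \sum_(E in F | intra g E) h E + \sum_(E in F | ~~ intra g E) h E.
  by move=> F h; rewrite (bigID (fun E => intra g E)).
have mI : forall (A B : {set {set V}}) (h : {set V} -> R),
    \sum_(E in [set E in A | intra g E] :|: [set E in B | ~~ intra g E] | intra g E) h E
    = \sum_(E in A | intra g E) h E.
  move=> A B h; apply: eq_bigl => E; rewrite !inE.
  by case: (intra g E); rewrite ?andbT ?andbF ?orbF.
have mX : forall (A B : {set {set V}}) (h : {set V} -> R),
    \sum_(E in [set E in A | intra g E] :|: [set E in B | ~~ intra g E] | ~~ intra g E) h E
    = \sum_(E in B | ~~ intra g E) h E.
  move=> A B h; apply: eq_bigl => E; rewrite !inE.
  by case: (intra g E); rewrite ?andbT ?andbF.
have h1 := hmin _ (mix_st irr hT hst hTm p1).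
have h2 := hmin _ (mix_st irr hst hT p1 hTm).
rewrite (dec Tbar) (dec ([set E in T | intra g E] :|: _)) mI mX lerD2r in h1.
rewrite (dec Tbar) (dec ([set E in Tbar | intra g E] :|: _)) mI mX lerD2l in h2.
have eI : forall F : {set {set V}},
    \sum_(E in F | intra g E) w1 E = beta * \sum_(E in F | intra g E) - w E.
  move=> F; rewrite mulr_sumr; apply: eq_bigr => E /andP[_ hi].
  by rewrite /w1 /wprime hi mulrN.
have eX : forall F : {set {set V}},
    \sum_(E in F | ~~ intra g E) w1 E = \sum_(E in F | ~~ intra g E) - w E.
  move=> F; apply: eq_bigr => E /andP[_ hi].
  by rewrite /w1 /wprime (negbTE hi).
rewrite !eI ler_pM2l in h1; last by apply: lt_trans hbeta.
rewrite !eX in h2.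
rewrite (dec Tbar) (dec T); exact: lerD.
Qed.
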